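(* Let $A$ be an $n\times n\times n$ ASHM and $P$ an $n\times n\times n$ permutation hypermatrix. Then $L(A)\preceq_l L(P)$; that is, every row and every column of $L(A)$ is majorized by $z_n=(n,n-1,\ldots,1)$.
   Context: An $n\times n$ alternating sign matrix (ASM) is an $n\times n$ matrix with entries in $\{0,1,-1\}$ such that in every row and column the nonzeros alternate in sign, beginning and ending with $+1$. An $n\times n\times n$ hypermatrix $A=[a_{ijk}]$ is written $A=[A_1,\ldots,A_n]$ with $A_k=[a_{ijk}]_{i,j}$; lines are obtained by fixing two of the three indices. $A$ is an ASHM if all entries lie in $\{0,\pm1\}$ and in every line the nonzeros alternate in sign beginning and ending with $+1$. A permutation hypermatrix is a $(0,1)$-hypermatrix with exactly one $1$ in each line. For an ASHM, $L(A)=1A_1+2A_2+\cdots+nA_n$. For $x,y\in\mathbb R^n$, $x$ is majorized by $y$ ($x\preceq y$) if $\sum_{j=1}^k x_{[j]}\le\sum_{j=1}^k y_{[j]}$ for all $k\le n$ with equality for $k=n$, where $x_{[j]}$ is the $j$-th largest component of $x$. For matrices $X,Y$ of equal size, $X\preceq_l Y$ means every row (column) of $X$ is majorized by the corresponding row (column) of $Y$. *)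

(* Defs.v *)
From HB Require Import structures.
From mathcomp Require Import all_boot all_order all_algebra.
Set Implicit Arguments. Unset Strict Implicit. Unset Printing Implicit Defensive.
Import Order.TTheory GRing.Theory Num.Theory.
Local Open Scope ring_scope.

(* An n x n x n hypermatrix A = [a_ijk] with integer entries: A i j k = a_{ijk}
   (indices 0-based: i,j,k : 'I_n stand for 1..n). *)
Definition hypermatrix (n : nat) := 'I_n -> 'I_n -> 'I_n -> int.

Definition line3 n (A : hypermatrix n) (i j : 'I_n) : seq int :=
  [seq A i j k | k <- enum 'I_n].
Definition line2 n (A : hypermatrix n) (i k : 'I_n) : seq int :=
  [seq A i j k | j <- enum 'I_n].
Definition line1 n (A : hypermatrix n) (j k : 'I_n) : seq int :=
  [seq A i j k | i <- enum 'I_n].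

Definition all_lines n (A : hypermatrix n) (P : seq int -> bool) : bool :=
  [forall i : 'I_n, forall j : 'I_n,
     [&& P (line3 A i j), P (line2 A i j) & P (line1 A i j)]].

(* A sequence whose entries are in {0,1,-1} and whose nonzero entries
   alternate in sign, beginning and ending with +1. *)
Definition alt_sign (s : seq int) : bool :=
  let t := [seq x <- s | x != 0] in
  [&& all (fun x : int => (x == 0) || (x == 1) || (x == -1)) s,
      t == [seq (if odd m then -1 else 1) | m <- iota 0 (size t)]
    & odd (size t)].

Definition is_ASHM n (A : hypermatrix n) : bool := all_lines A alt_sign.

Definition one_one (s : seq int) : bool :=
  all (fun x : int => (x == 0) || (x == 1)) s && (count (fun x : int => x == 1) s == 1)%N.

Definition is_perm_hypermatrix n (A : hypermatrix n) : bool := all_lines A one_one.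

(* L(A) = 1 A_1 + 2 A_2 + ... + n A_n,  with A_k = [a_ijk]_{i,j} *)
Definition Lmx n (A : hypermatrix n) : 'M[int]_n :=
  \matrix_(i, j) \sum_(k < n) (k.+1)%:Z * A i j k.

Definition sort_desc n (x : 'rV[int]_n) : seq int :=
  sort (fun a b => b <= a) [seq x 0 j | j <- enum 'I_n].

Definition majorized n (x y : 'rV[int]_n) : Prop :=
  (forall k : nat, (k <= n)%N ->
     \sum_(j < k) nth 0 (sort_desc x) j <= \sum_(j < k) nth 0 (sort_desc y) j)
  /\ \sum_(j < n) nth 0 (sort_desc x) j = \sum_(j < n) nth 0 (sort_desc y) j.

Definition majorized_l n (X Y : 'M[int]_n) : Prop :=
  (forall i : 'I_n, majorized (row i X) (row i Y)) /\
  (forall j : 'I_n, majorized (col j X)^T (col j Y)^T).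

Definition z_vec n : 'rV[int]_n := \row_(j < n) (n - j)%:Z.

(* Main.v *)
Require Import Defs.
From mathcomp Require Import all_boot all_order all_algebra zify.
Import Order.TTheory GRing.Theory Num.Theory.
Local Open Scope ring_scope.

Lemma alt_sum c d : \sum_(m <- iota d c) (if odd m then -1 else 1 : int) =
  if odd c then (if odd d then -1 else 1) else 0.
Proof.
elim: c d => [|c IH] d; first by rewrite big_nil.
rewrite /= big_cons IH /=.
by case: (odd c); case: (odd d) => //=; rewrite ?addr0 // ?subrr // addrC subrr.
Qed.

Lemma sum_nz (s : seq int) : \sum_(x <- s) x = \sum_(x <- [seq x <- s | x != 0]) x.
Proof.
rewrite big_filter [RHS]big_mkcond /=; apply: eq_bigr => x _.
by case: eqP => [->|].
Qed.

Lemma filter_drop' (T : Type) (p : pred T) (s : seq T) t :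
  filter p (drop t s) = drop (size (filter p (take t s))) (filter p s).
Proof. by rewrite -{3}(cat_take_drop t s) filter_cat drop_size_cat. Qed.

Lemma alt_suffix (s : seq int) t : alt_sign s ->
  let v := \sum_(x <- drop t s) x in (v == 0) || (v == 1).
Proof.
case/and3P => _ /eqP Ht Hodd /=.
set L := size _ in Ht Hodd.
rewrite sum_nz filter_drop' Ht -map_drop drop_iota big_map alt_sum add0n.
set d := size _.
case: (leqP d L) => Hd.
  rewrite oddB // Hodd.
  by case: (odd d).
by rewrite (eqP (ltnW Hd : (L <= d)%N)) // subn0 ?eqxx. 
Qed.

Lemma alt_total (s : seq int) : alt_sign s -> \sum_(x <- s) x = 1.
Proof.
case/and3P => _ /eqP Ht Hodd.
rewrite sum_nz Ht big_map alt_sum.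
by rewrite Hodd.
Qed.

Lemma drop_enum_sum n (g : 'I_n -> int) t :
  \sum_(x <- drop t (map g (enum 'I_n))) x = \sum_(k < n | (t <= k)%N) g k.
Proof.
have -> : \sum_(k < n | (t <= k)%N) g k = \sum_(k <- enum 'I_n | (t <= k)%N) g k by rewrite big_enum_cond.
rewrite -map_drop big_map.
have -> : \sum_(k <- enum 'I_n | (t <= k)%N) g k =
   \sum_(k <- take t (enum 'I_n) ++ drop t (enum 'I_n) | (t <= k)%N) g k by rewrite cat_take_drop.
rewrite big_cat /=.
rewrite [X in _ = X + _]big1_seq ?add0r; last first.
  move=> k /andP [Hk Hin].
  have : val k \in map val (take t (enum 'I_n)) by apply: map_f.
  by rewrite map_take val_enum_ord take_iota mem_iota /= add0n leq_min ltnNge Hk.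
rewrite [RHS]big_seq_cond [LHS]big_seq_cond; apply: eq_bigl => k.
case Hin: (k \in drop t (enum 'I_n)) => //=.
have : val k \in map val (drop t (enum 'I_n)) by apply: map_f.
by rewrite map_drop val_enum_ord drop_iota mem_iota add0n => /andP [->].
Qed.

Lemma count_le n (k : 'I_n) : (\sum_(t < n) ((t <= k)%N : nat) = k.+1)%N.
Proof.
rewrite -(big_mkord xpredT (fun t => ((t <= k)%N : nat))).
rewrite (big_cat_nat _ (n:=k.+1)) //=.

rewrite (@eq_big_nat _ _ _ 0 k.+1 _ (fun _ => 1%N)); last by move=> t /andP [_ Ht]; rewrite -ltnS Ht.
rewrite [X in (_ + X)%N](@eq_big_nat _ _ _ k.+1 n _ (fun _ => 0%N)); last first.
  by move=> t /andP [Ht _]; rewrite leqNgt Ht.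
by rewrite sum_nat_const_nat big1 // muln1 subn0 addn0.
Qed.

Lemma weight_sum n (g : 'I_n -> int) :
  \sum_(k < n) (k.+1)%:Z * g k = \sum_(t < n) \sum_(k < n | (t <= k)%N) g k.
Proof.
rewrite [RHS](eq_bigr (fun t : 'I_n => \sum_(k<n) (((t:nat) <= k)%N)%:Z * g k)); last first.
  by move=> t _; rewrite big_mkcond; apply eq_bigr => k _; case: ifP => _; rewrite ?mul1r ?mul0r.
rewrite exchange_big; apply eq_bigr => k _; rewrite -mulr_suml; congr (_ * _).
rewrite (eq_bigr (fun t : 'I_n => (((t:nat) <= k)%N)%:R)); last by move=> t _; rewrite natz.
by rewrite -natr_sum natz count_le.
Qed.

Lemma minn_sum n k : (k <= n)%N ->
  (\sum_(t < n) minn k (n - t) = \sum_(j < k) (n - j))%N.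
Proof.
elim: n k => [|n IH] k Hk.
  by move: Hk; rewrite leqn0 => /eqP ->; rewrite !big_ord0.
rewrite big_ord_recl /= subn0.
have E : forall t : 'I_n, (n.+1 - bump 0 t = n - t)%N by move=> t; rewrite /bump /= add1n subSS.
rewrite (eq_bigr (fun t : 'I_n => minn k (n - t))); last by move=> t _; rewrite E.
case: (leqP k n) => Hkn.
  rewrite IH // (minn_idPl (leqW Hkn)).
  rewrite (eq_bigr (fun j : 'I_k => (n - j) + 1)%N); last first.
    move=> j _; have := ltn_ord j; lia.
  by rewrite big_split /= sum_nat_const card_ord muln1 addnC.
have Hk' : k = n.+1 by lia.
subst k.
rewrite (minn_idPl (leqnn _)).
rewrite (eq_bigr (fun t : 'I_n => minn n (n - t))); last first.
  move=> t _; have := ltn_ord t; lia.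
by rewrite IH // big_ord_recl /= subn0.
Qed.

Lemma sum_take (s : seq int) k : (k <= size s)%N ->
  \sum_(j < k) nth 0 s j = \sum_(y <- take k s) y.
Proof.
move=> Hk; rewrite (big_nth 0) size_takel // big_mkord.
by apply: eq_bigr => j _; rewrite nth_take.
Qed.

Lemma sort_desc_z n : sort_desc (z_vec n) = [seq (n - m)%:Z | m <- iota 0 n].
Proof.
rewrite /sort_desc.
have -> : [seq z_vec n 0 j | j <- enum 'I_n] = [seq (n - m)%:Z | m <- iota 0 n].
  by rewrite -val_enum_ord -map_comp; apply: eq_map => j; rewrite /z_vec mxE.
apply: sorted_sort.
  by move=> a b c Hba Hcb; apply: le_trans Hcb Hba.
rewrite sorted_map; apply: (sub_sorted _ (iota_ltn_sorted 0 n)).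
move=> a b Hab /=; rewrite lez_nat; lia.
Qed.

Lemma nth_sort_desc_z n j : (j < n)%N -> nth 0 (sort_desc (z_vec n)) j = (n - j)%:Z.
Proof. by move=> Hj; rewrite sort_desc_z (nth_map 0%N) ?size_iota // nth_iota. Qed.

Lemma maj_generic n (x : 'rV[int]_n) (r : 'I_n -> nat -> int) :
  (forall j, x 0 j = \sum_(t < n) r j t) ->
  (forall j t, (r j t == 0) || (r j t == 1)) ->
  (forall t : 'I_n, \sum_j r j t = (n - t)%:Z) ->
  majorized x (z_vec n).
Proof.
move=> Hx Hr Hcol.
set le := (fun a b : int => b <= a).
set sig := sort (relpre (x 0) le) (enum 'I_n).
have Hs : sort_desc x = map (x 0) sig by rewrite /sort_desc sort_map.
have Hu : uniq sig by rewrite sort_uniq enum_uniq.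
have Hsz : size sig = n by rewrite size_sort size_enum_ord.
have Hr0 : forall j t, 0 <= r j t by move=> j t; case/orP: (Hr j t) => /eqP ->.
have Hr1 : forall j t, r j t <= 1 by move=> j t; case/orP: (Hr j t) => /eqP ->.
have Key : forall k, (k <= n)%N -> \sum_(j < k) nth 0 (sort_desc x) j =
     \sum_(t < n) \sum_(j <- take k sig) r j t.
  move=> k Hk; rewrite sum_take; last by rewrite Hs size_map Hsz.
  rewrite Hs -map_take big_map.
  rewrite (eq_bigr (fun j => \sum_(t < n) r j t)); last by move=> j _; rewrite Hx.
  by rewrite exchange_big.
split.
  move=> k Hk; rewrite Key //.
  apply: (@le_trans _ _ (\sum_(t < n) (minn k (n - t))%:Z)).
    apply: ler_sum => t _.
    have B1 : \sum_(j <- take k sig) r j t <= k%:Z.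
      apply: (@le_trans _ _ (\sum_(j <- take k sig) 1)); first by apply: ler_sum => j _.
      have -> : \sum_(j <- take k sig) (1:int) = (\sum_(j <- take k sig) 1%N)%:R by rewrite natr_sum.
      by rewrite sum1_size size_takel ?Hsz // natz.
    have B2 : \sum_(j <- take k sig) r j t <= (n - t)%:Z.
      rewrite -Hcol big_uniq; last exact: take_uniq.
      rewrite [X in _ <= X](bigID (fun j => j \in take k sig)) /= lerDl.
      by apply: sumr_ge0 => j _.
    by case: (leqP k (n - t)) => H.
  rewrite (eq_bigr (fun t : 'I_n => (minn k (n - t))%:R)); last by move=> t _; rewrite natz.
  rewrite -natr_sum minn_sum // natr_sum.
  rewrite le_eqVlt; apply/orP; left; apply/eqP; apply: eq_bigr => j _.
  by rewrite nth_sort_desc_z ?natz //; apply: leq_trans (ltn_ord j) Hk.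
rewrite Key // take_oversize ?Hsz //.
rewrite (eq_bigr (fun t : 'I_n => \sum_(j <- enum 'I_n) r j t)); last first.
  by move=> t _; apply: perm_big; rewrite /sig perm_sort.
rewrite (eq_bigr (fun t : 'I_n => (n - t)%:Z)); last by move=> t _; rewrite big_enum Hcol.
by apply: eq_bigr => j _; rewrite nth_sort_desc_z.
Qed.

Lemma sum_line n (g : 'I_n -> int) : \sum_(x <- [seq g k | k <- enum 'I_n]) x = \sum_k g k.
Proof. by rewrite big_map big_enum. Qed.

Lemma maj_from_alt n (x : 'rV[int]_n) (a : 'I_n -> 'I_n -> int) :
  (forall j, x 0 j = \sum_(k < n) (k.+1)%:Z * a j k) ->
  (forall j, alt_sign [seq a j k | k <- enum 'I_n]) ->
  (forall k, alt_sign [seq a j k | j <- enum 'I_n]) ->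
  majorized x (z_vec n).
Proof.
move=> Hx Hrow Hcolumn.
apply: (@maj_generic n x (fun j t => \sum_(k < n | (t <= k)%N) a j k)).
- by move=> j; rewrite Hx weight_sum.
- by move=> j t; rewrite -drop_enum_sum; apply: alt_suffix.
- move=> t; rewrite exchange_big /=.
  rewrite (eq_bigr (fun _ => 1)); last first.
    by move=> k _; rewrite -(@alt_total _ (Hcolumn k)) sum_line.
  rewrite -(@drop_enum_sum n (fun _ => 1) t) -map_drop big_map.
  have -> : \sum_(k <- drop t (enum 'I_n)) (1:int) = (\sum_(k <- drop t (enum 'I_n)) 1%N)%:R by rewrite natr_sum.
  by rewrite sum1_size size_drop size_enum_ord natz.
Qed.

Lemma one_one_unique n (g : 'I_n -> int) : one_one [seq g k | k <- enum 'I_n] ->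
  exists k0, g k0 = 1 /\ forall k, k != k0 -> g k = 0.
Proof.
case/andP => /allP Hall /eqP Hc.
have H01 : forall k, (g k == 0) || (g k == 1).
  by move=> k; apply: Hall; apply: map_f; rewrite mem_enum.
rewrite count_map in Hc.

have Hs : (\sum_(j | g j == 1) 1 = 1)%N.
  by rewrite -[RHS]Hc -sum1_count big_enum_cond.
have : has (preim g (fun x : int => x == 1)) (enum 'I_n) by rewrite has_count Hc.
case/hasP => k0 _ /= /eqP Hk0.
exists k0; split => // k Hk.
have := H01 k; case/orP => /eqP // Hk1.
move: Hs; rewrite (bigD1 k0) /= ?Hk0 // (bigD1 k) /= ?Hk Hk1 //.
Qed.

Lemma sort_perm_z n (y : 'rV[int]_n) (p : 'I_n -> 'I_n -> int) :
  (forall j, y 0 j = \sum_(k < n) (k.+1)%:Z * p j k) ->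
  (forall j, one_one [seq p j k | k <- enum 'I_n]) ->
  (forall k, one_one [seq p j k | j <- enum 'I_n]) ->
  sort_desc y = sort_desc (z_vec n).
Proof.
move=> Hy Hr Hc.
have Hval : forall j, exists k : 'I_n, p j k = 1 /\ y 0 j = (k.+1)%:Z.
  move=> j; case: (@one_one_unique n _ (Hr j)) => k0 [H1 H0]; exists k0; split => //.
  rewrite Hy (bigD1 k0) //= H1 mulr1 big1 ?addr0 // => k Hk.
  by rewrite H0 ?mulr0.
have Hinj : injective (y 0).
  move=> j1 j2 E; case: (Hval j1) => k1 [P1 E1]; case: (Hval j2) => k2 [P2 E2].
  have Ek : k1 = k2 by apply/val_inj; move: E; rewrite E1 E2 => -[].
  subst k2; case: (@one_one_unique n _ (Hc k1)) => j0 [_ H0].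
  case: (eqVneq j1 j0) => [->|/H0 h]; last by rewrite h in P1.
  case: (eqVneq j2 j0) => [->|/H0 h] //; by rewrite h in P2.
rewrite /sort_desc; apply/perm_sortP; [ by move=> a b; exact: le_total
  | by move=> a b c Hba Hcb; apply: le_trans Hcb Hba
  | by move=> a b /andP [H1 H2]; apply: le_anti; rewrite H1 H2 | ].
have U1 : uniq [seq y 0 j | j <- enum 'I_n] by rewrite map_inj_uniq ?enum_uniq.
apply: uniq_perm => //.
  rewrite map_inj_uniq ?enum_uniq // => a b /=; rewrite !mxE => -[] E.
  apply/val_inj; have := ltn_ord a; have := ltn_ord b; move: E => /=; lia.
have Hsub : {subset [seq y 0%R j | j <- enum (ordinal n)] <= [seq z_vec n 0%R j | j <- enum (ordinal n)]}.
  move=> v /mapP [j _ ->]; case: (Hval j) => k [_ ->].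
  apply/mapP; exists (rev_ord k); first by rewrite mem_enum.
  rewrite mxE /=; congr Posz; have := ltn_ord k; lia.
have Hsz : (size [seq z_vec n 0%R j | j <- enum 'I_n] <= size [seq y 0%R j | j <- enum 'I_n])%N.
  by rewrite !size_map.
by have [_ Heq] := uniq_min_size U1 Hsub Hsz.
Qed.

Theorem mainTheorem5 (n : nat) (A P : hypermatrix n) :
  is_ASHM A -> is_perm_hypermatrix P ->
  majorized_l (Lmx A) (Lmx P) /\
  (forall i : 'I_n, majorized (row i (Lmx A)) (z_vec n)) /\
  (forall j : 'I_n, majorized (col j (Lmx A))^T (z_vec n)).
Proof.
move=> HA HP.
have L3 : forall i j, alt_sign (line3 A i j).
  by move=> i j; have := forallP (forallP HA i) j; case/and3P.
have L2 : forall i j, alt_sign (line2 A i j).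
  by move=> i j; have := forallP (forallP HA i) j; case/and3P.
have L1 : forall i j, alt_sign (line1 A i j).
  by move=> i j; have := forallP (forallP HA i) j; case/and3P.
have P3 : forall i j, one_one (line3 P i j).
  by move=> i j; have := forallP (forallP HP i) j; case/and3P.
have P2 : forall i j, one_one (line2 P i j).
  by move=> i j; have := forallP (forallP HP i) j; case/and3P.
have P1 : forall i j, one_one (line1 P i j).
  by move=> i j; have := forallP (forallP HP i) j; case/and3P.
have Hrow : forall i : 'I_n, majorized (row i (Lmx A)) (z_vec n).
  move=> i; apply: (@maj_from_alt n _ (fun j k => A i j k)).
  - by move=> j; rewrite !mxE.
  - by move=> j; apply: L3.
  - by move=> k; apply: L2.
have Hcol : forall j : 'I_n, majorized (col j (Lmx A))^T (z_vec n).
  move=> j; apply: (@maj_from_alt n _ (fun i k => A i j k)).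
  - by move=> i; rewrite !mxE.
  - by move=> i; apply: L3.
  - by move=> k; apply: L1.
split; last by split.
split.
  move=> i; rewrite /majorized (@sort_perm_z n (row i (Lmx P)) (fun j k => P i j k)); first exact: (Hrow i).
  - by move=> j; rewrite !mxE.
  - by move=> j; apply: P3.
  - by move=> k; apply: P2.
move=> j; rewrite /majorized (@sort_perm_z n (col j (Lmx P))^T (fun i k => P i j k)); first exact: (Hcol j).
- by move=> i; rewrite !mxE.
- by move=> i; apply: P3.
- by move=> k; apply: P1.
Qed.
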